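(* Let $\beta$ be a basis set in $x_1,\dots,x_r$ over an algebraically closed field $k$, and let $c^{\mathbf d}_{\mathbf j}$ be an arrow such that $\mathbf x^{\mathbf d}$ is a minimal generator of $I_\beta$ and $\mathbf x^{\mathbf j}$ is a maximal element of $\beta$ under divisibility. Then $c^{\mathbf d}_{\mathbf j}$ cannot be translated except to itself, and $c^{\mathbf d}_{\mathbf j}$ belongs to every set $\mathcal B$ of arrows whose images form a $k$-basis of $M/M^2$.
   Context: Monomials are identified with exponent vectors. A basis set is a finite nonempty set $\beta$ of monomials closed under taking divisors; $I_\beta$ is the ideal generated by monomials not in $\beta$, $n=|\beta|$. $\mathbf H^n$ is the Hilbert scheme of $n$ points of $\mathbb A^r_k$, $t_\beta$ the point of $I_\beta$, $U_\beta$ the open affine subscheme of points $t$ with $\beta$ a $k$-basis of $k[\mathbf x]/I_t$, $R$ its coordinate ring; for $\mathbf x^{\mathbf d}\notin\beta$, $\mathbf x^{\mathbf j}\in\beta$, $c^{\mathbf d}_{\mathbf j}\in R$ is given by $\mathbf x^{\mathbf d}-\sum_{\mathbf j\in\beta}c^{\mathbf d}_{\mathbf j}(t)\mathbf x^{\mathbf j}\in I_t$; $M$ is the maximal ideal of $t_\beta$ in $R$. An arrow is a pair $(\mathbf d,\mathbf j)$ with tail $\mathbf x^{\mathbf d}\notin\beta$ and head $\mathbf x^{\mathbf j}\in\beta$, identified with $c^{\mathbf d}_{\mathbf j}$. A translation step replaces $(\mathbf d,\mathbf j)$ by $(\mathbf d\pm e_i,\mathbf j\pm e_i)$ provided the result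 is again an arrow (nonnegative exponents, head in $\beta$, tail not in $\beta$). *)

(* Defs.v *)
From HB Require Import structures.
From mathcomp Require Import all_boot all_order all_algebra.
From mathcomp Require Import mpoly.
From Stdlib Require Import Relation_Operators.


Unset Strict Implicit.
Unset Printing Implicit Defensive.

Import GRing.Theory.
Local Open Scope ring_scope.

Section HilbertChart.

Variable r : nat.
Local Notation mono := 'X_{1..r}.

(* A basis set: a finite nonempty set of monomials (given as a duplicate-free
   list) closed under taking divisors; divisibility is (m' <= m)%MM. *)
Definition is_basis_set (beta : seq mono) : Prop :=
  [/\ uniq beta, beta != [::] &
      forall m m' : mono, m \in beta -> (m' <= m)%MM -> m' \in beta].

(* x^d is a minimal generator of I_beta (the ideal generated by the
   monomials outside beta): x^d is not in beta, and every proper divisor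
   of x^d lies in beta. *)
Definition min_generator (beta : seq mono) (d : mono) : Prop :=
  d \notin beta /\ forall d' : mono, (d' <= d)%MM -> d' != d -> d' \in beta.

Definition maximal_elt (beta : seq mono) (j : mono) : Prop :=
  j \in beta /\ forall j' : mono, j' \in beta -> (j <= j')%MM -> j' = j.

Definition is_arrow (beta : seq mono) (a : mono * mono) : Prop :=
  a.1 \notin beta /\ a.2 \in beta.

(* One translation step (d,j) -> (d +- e_i, j +- e_i), the result being an
   arrow (nonnegativity is built in since exponents are natural numbers). *)
Definition translation_step (beta : seq mono) (a a' : mono * mono) : Prop :=
  is_arrow beta a' /\
  exists i : 'I_r,
    (a'.1 = (a.1 + U_(i))%MM /\ a'.2 = (a.2 + U_(i))%MM) \/
    (a.1 = (a'.1 + U_(i))%MM /\ a.2 = (a'.2 + U_(i))%MM).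

Definition translates (beta : seq mono) : mono * mono -> mono * mono -> Prop :=
  clos_refl_trans (mono * mono) (translation_step beta).

Definition border (beta : seq mono) : seq mono :=
  undup [seq x <- [seq (m + U_(i))%MM | m <- beta, i <- enum 'I_r]
        | x \notin beta].

Variable k : fieldType.

(* Polynomial ring in the variables c^b_l, b in the border, l in beta;
   variable (b, l) is 'X_(mxvec_index b l). *)
Definition nvars (beta : seq mono) : nat := (size (border beta) * size beta)%N.
Definition Pring (beta : seq mono) := {mpoly k[nvars beta]}.

Definition cvar (beta : seq mono) (m : mono) (l : 'I_(size beta)) : Pring beta :=
  match (insub (index m (border beta)) : option 'I_(size (border beta))) with
  | Some b => 'X_(mxvec_index b l)
  | None => 0
  end.

(* Generic multiplication matrix of x_i on k[x]/I_t in the basis beta: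
   column jj is the image of x_i * x^(beta_jj). *)
Definition mulmx_gen (beta : seq mono) (i : 'I_r) :
    'M[Pring beta]_(size beta, size beta) :=
  \matrix_(l, jj)
    (let m := (nth 0%MM beta jj + U_(i))%MM in
     if m \in beta then ((nth 0%MM beta l == m)%:R : Pring beta)
     else cvar beta m l).

Definition in_relJ (beta : seq mono) (p : Pring beta) : Prop :=
  exists g : 'I_r -> 'I_r -> 'I_(size beta) -> 'I_(size beta) -> Pring beta,
    p = \sum_(i < r) \sum_(i' < r) \sum_(a < size beta) \sum_(b < size beta)
          g i i' a b *
          (mulmx_gen beta i *m mulmx_gen beta i'
           - mulmx_gen beta i' *m mulmx_gen beta i) a b.

(* The coordinate ring is R = Pring beta / J.  Elements of R are handled
   through representatives in Pring beta. *)

(* Coordinates of x^d mod I_t in the basis beta: X^d e_0, where e_0 is the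
   basis vector of the monomial 1. *)
Definition e_one (beta : seq mono) : 'cV[Pring beta]_(size beta) :=
  \col_l ((nth 0%MM beta l == 0%MM)%:R).

Definition coordvec (beta : seq mono) (d : mono) : 'cV[Pring beta]_(size beta) :=
  foldr (fun i v => iter (d i) (mulmx (mulmx_gen beta i)) v)
        (e_one beta) (enum 'I_r).

(* (a representative in Pring beta of) the function c^d_j in R *)
Definition carrow (beta : seq mono) (a : mono * mono) : Pring beta :=
  \sum_(l < size beta) (nth 0%MM beta l == a.2)%:R * coordvec beta a.1 l ord0.

(* t_beta is the point where all c^b_l vanish (the origin).  M is the
   maximal ideal of t_beta in R: classes of polynomials vanishing there. *)
Definition in_M (beta : seq mono) (f : Pring beta) : Prop :=
  meval (fun _ => 0) f = 0.

Definition in_M2 (beta : seq mono) (f : Pring beta) : Prop :=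
  exists (s : seq (Pring beta * Pring beta)) (h : Pring beta),
    [/\ forall q, q \in s -> in_M beta q.1 /\ in_M beta q.2,
        in_relJ beta h &
        f = \sum_(q <- s) q.1 * q.2 + h].

Definition cotangent_basis (beta : seq mono) (B : mono * mono -> Prop) : Prop :=
  [/\ forall a, B a -> is_arrow beta a,
      forall (s : seq (mono * mono)) (lam : mono * mono -> k),
        uniq s -> (forall a, a \in s -> B a) ->
        in_M2 beta (\sum_(a <- s) lam a *: carrow beta a) ->
        forall a, a \in s -> lam a = 0 &
      forall f : Pring beta, in_M beta f ->
        exists (s : seq (mono * mono)) (lam : mono * mono -> k),
          (forall a, a \in s -> B a) /\
          in_M2 beta (f - \sum_(a <- s) lam a *: carrow beta a)].

End HilbertChart.

Arguments is_basis_set {r}.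
Arguments min_generator {r}.
Arguments maximal_elt {r}.
Arguments is_arrow {r}.
Arguments translation_step {r}.
Arguments translates {r}.
Arguments border {r}.
Arguments nvars {r}.
Arguments Pring {r}.
Arguments cvar {r k}.
Arguments mulmx_gen {r k}.
Arguments in_relJ {r k}.
Arguments e_one {r k}.
Arguments coordvec {r k}.
Arguments carrow {r k}.
Arguments in_M {r k}.
Arguments in_M2 {r k}.
Arguments cotangent_basis {r} k.

(* Main.v *)
Require Import Defs.
From HB Require Import structures.
From mathcomp Require Import all_boot all_order all_algebra.
From mathcomp Require Import mpoly.
From Stdlib Require Import Relation_Operators Operators_Properties.

Lemma part1 (r : nat) (beta : seq 'X_{1..r}) (d j : 'X_{1..r}) :
  min_generator beta d -> maximal_elt beta j ->
  forall a' : 'X_{1..r} * 'X_{1..r}, translates beta (d, j) a' -> a' = (d, j).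
Proof.
move=> [dnb dmin] [jb jmax] a' /clos_rt_rt1n_iff H.
case: H => // y z [[y1nb y2b] [i [[/= E1 E2]|[/= E1 E2]]]] _.
- have := jmax _ y2b; rewrite E2 => /(_ (lem_addr _ _)) /mnmP /(_ i).
  by rewrite mnmDE mnm1E eqxx => /eqP; rewrite -{2}(addn0 (j i)) eqn_add2l.
- have : y.1 \in beta.
    apply: dmin; first by rewrite E1 lem_addr.
    apply/eqP => /mnmP /(_ i); rewrite E1 mnmDE mnm1E eqxx.
    by move=> /eqP; rewrite -{1}(addn0 (y.1 i)) eqn_add2l.
  by rewrite (negbTE y1nb).
Qed.
Import GRing.Theory.

Section P2.
Variables (k : closedFieldType) (r : nat) (beta : seq 'X_{1..r}) (d j : 'X_{1..r}).
Hypotheses (Hb : is_basis_set beta) (Ha : is_arrow beta (d, j))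
  (Hd : min_generator beta d) (Hj : maximal_elt beta j).
Local Open Scope ring_scope.

Lemma zero_in : 0%MM \in beta.
Proof.
case: Hb => _ ne cl; case: beta ne cl => // x s _ cl.
apply: (cl x); first exact: mem_head.
by apply/mnm_lepP => i; rewrite mnm0E.
Qed.

Lemma d_nb : d \notin beta. Proof. by case: Hd. Qed.
Lemma j_b : j \in beta. Proof. by case: Hj. Qed.
Lemma uniqb : uniq beta. Proof. by case: Hb. Qed.
Lemma clb m m' : m \in beta -> (m' <= m)%MM -> m' \in beta.
Proof. by case: Hb => _ _; apply. Qed.

Lemma neq_addU (m : 'X_{1..r}) i : (m + U_(i))%MM != m.
Proof.
apply/eqP => /mnmP /(_ i); rewrite mnmDE mnm1E eqxx.
by move=> /eqP; rewrite -{2}(addn0 (m i)) eqn_add2l.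
Qed.

Lemma in_border m i : m \in beta -> (m + U_(i))%MM \notin beta ->
  (m + U_(i))%MM \in border beta.
Proof.
move=> mb nb; rewrite /border mem_undup mem_filter nb /=.
by apply: allpairs_f => //; rewrite mem_enum.
Qed.

Lemma d_border : d \in border beta.
Proof.
have dn0 : d != 0%MM by apply: contraNneq d_nb => ->; exact: zero_in.
have [i di] : exists i, (0 < d i)%N.
  apply/existsP; apply: contraR dn0 => /existsPn H; apply/eqP/mnmP => i.
  by rewrite mnm0E; move: (H i); rewrite lt0n negbK => /eqP.
have le : (U_(i) <= d)%MM.
  by apply/mnm_lepP => i'; rewrite mnm1E; case: eqP => [<-|]. 
have E : ((d - U_(i)) + U_(i))%MM = d by rewrite submK.
rewrite -E; apply: in_border; last by rewrite E d_nb.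
case: Hd => _; apply; first exact: lem_subr.
by rewrite -{2}E eq_sym neq_addU.
Qed.

Definition bd : 'I_(size (border beta)) := Ordinal (etrans (index_mem _ _) d_border).
Definition jd : 'I_(size beta) := Ordinal (etrans (index_mem _ _) j_b).
Definition idx : 'I_(nvars beta) := mxvec_index bd jd.
Definition ev (v : 'I_(nvars beta)) : {poly k} := if v == idx then 'X else 0.
Definition psi (p : Pring k beta) : {poly k} := mmap (@polyC k) ev p.
HB.instance Definition _ := GRing.RMorphism.copy psi (mmap (@polyC k) ev).

Lemma psi_rm : multiplicative psi. Proof. exact: mmap_is_multiplicative. Qed.
Lemma psiM p q : psi (p * q) = psi p * psi q. Proof. by rewrite /psi rmorphM. Qed.

Lemma mxvec_index_eq m n (a b : 'I_m) (c e : 'I_n) :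
  (mxvec_index a c == mxvec_index b e) = (a == b) && (c == e).
Proof.
by rewrite /mxvec_index (inj_eq (@cast_ord_inj _ _ _)) (inj_eq enum_rank_inj) xpair_eqE.
Qed.

Lemma jd_eq (l : 'I_(size beta)) : (l == jd) = (nth 0%MM beta l == j).
Proof.
apply/eqP/eqP => [->|E]; first by rewrite /= nth_index // j_b.
by apply: val_inj; rewrite /= -E index_uniq // uniqb.
Qed.

Lemma psi_cvar m l : m \in border beta ->
  psi (cvar beta m l) = ((m == d) && (nth 0%MM beta l == j))%:R * 'X.
Proof.
move=> mB; rewrite /cvar insubT ?index_mem // => Hm /=.
rewrite /psi mmapX mmap1U /ev /idx mxvec_index_eq jd_eq.
have -> : (Ordinal Hm == bd) = (m == d).
  apply/eqP/eqP => [/(congr1 val) /= E|E]; last by apply: val_inj; rewrite /= E.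
  by rewrite -(nth_index 0%MM mB) E nth_index // d_border.
by case: (_ && _); rewrite ?mul1r ?mul0r.
Qed.

Definition Y i := map_mx psi (mulmx_gen beta i).

Lemma Y_E i l c : Y i l c =
  let m := (nth 0%MM beta c + U_(i))%MM in
  if m \in beta then (nth 0%MM beta l == m)%:R
  else ((m == d) && (nth 0%MM beta l == j))%:R * 'X.
Proof.
rewrite /Y !mxE /=; case: ifP => mb; first by rewrite /psi rmorph_nat.
by rewrite psi_cvar // in_border ?mb // mem_nth.
Qed.


Definition v (m : 'X_{1..r}) : 'cV[{poly k}]_(size beta) :=
  \col_l (((nth 0%MM beta l == m)%:R : {poly k})
          + ((m == d) && (nth 0%MM beta l == j))%:R * 'X).

Definition eqv (u w : 'cV[{poly k}]_(size beta)) :=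
  forall l, 'X^2 %| (u l 0 - w l 0).

Lemma dvd_sum (D : {poly k}) (I : Type) (s : seq I) (P : pred I) F :
  (forall i, P i -> D %| F i) -> D %| \sum_(i <- s | P i) F i.
Proof.
move=> H; apply: (big_ind (fun x => D %| x)); [exact: dvdp0| |exact: H].
by move=> x y; apply: dvdp_add.
Qed.

Lemma sum_nth (c0 : 'I_(size beta)) (F : 'I_(size beta) -> {poly k}) :
  \sum_c F c * (nth 0%MM beta c == nth 0%MM beta c0)%:R = F c0.
Proof.
rewrite (bigD1 c0) //= eqxx mulr1 big1 ?addr0 // => c /negbTE ne.
by rewrite nth_uniq ?uniqb // val_eqE ne mulr0.
Qed.

Lemma memb_ord m : m \in beta -> exists c0 : 'I_(size beta), m = nth 0%MM beta c0.
Proof. by move=> mb; exists (Ordinal (etrans (index_mem _ _) mb)); rewrite /= nth_index. Qed.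

Lemma notin_nth m (l : 'I_(size beta)) : m \notin beta -> (nth 0%MM beta l == m) = false.
Proof. by move=> mb; apply: contraNF mb => /eqP <-; rewrite mem_nth. Qed.

Lemma j_max i : (j + U_(i))%MM \notin beta.
Proof.
apply/negP => H; case: Hj => _ /(_ _ H (lem_addr _ _)) /eqP.
by rewrite (negbTE (neq_addU _ _)).
Qed.

Lemma step i m : eqv (Y i *m v m) (v (m + U_(i))%MM).
Proof.
move=> l; rewrite !mxE.
under eq_bigr do rewrite /v [X in _ * X]mxE mulrDr.
rewrite big_split /=.
set S1 := \sum_c _; set S2 := \sum_c _.
have D2 : 'X^2 %| S2.
  rewrite /S2; case: (m == d) => /=; last first.
    by rewrite big1 ?dvdp0 // => c _; rewrite mul0r mulr0.
  apply: dvd_sum => c _; case: eqP => Ec /=; last by rewrite mul0r mulr0 dvdp0.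
  rewrite Y_E /= Ec (negbTE (j_max i)) expr2.
  by apply: dvdp_mul; apply: dvdp_mull; exact: dvdpp.
suff -> : S1 = (nth 0%MM beta l == (m + U_(i))%MM)%:R +
          (((m + U_(i))%MM == d) && (nth 0%MM beta l == j))%:R * 'X.
  by rewrite (addrC (_ + S2)) addKr.
rewrite /S1; case mb: (m \in beta).
  have [c0 ->] := memb_ord _ mb; rewrite sum_nth Y_E /=.
  case: ifP => m1b.
    have -> : ((nth 0%MM beta c0 + U_(i))%MM == d) = false.
      by apply: contraTF m1b => /eqP ->; rewrite d_nb.
    by rewrite /= mul0r addr0.
  by rewrite (notin_nth (nth 0%MM beta c0 + U_(i))%MM l) ?m1b // add0r.
rewrite big1 => [|c _]; last by rewrite notin_nth ?mb // mulr0.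
have m1b : (m + U_(i))%MM \notin beta.
  by apply: contraFN mb => H; apply: clb H _; exact: lem_addr.
rewrite notin_nth //.
have -> : ((m + U_(i))%MM == d) = false.
  apply: contraFF mb => /eqP E; case: Hd => _; apply; first by rewrite -E lem_addr.
  by rewrite -E eq_sym neq_addU.
by rewrite mul0r addr0.
Qed.


Lemma eqv_mul (M : 'M[{poly k}]_(size beta)) u w : eqv u w -> eqv (M *m u) (M *m w).
Proof.
move=> H l; rewrite !mxE -sumrB; apply: dvd_sum => c _.
by rewrite -mulrBr; apply: dvdp_mull.
Qed.

Lemma eqv_trans u w z : eqv u w -> eqv w z -> eqv u z.
Proof.
move=> H1 H2 l; have -> : u l 0 - z l 0 = (u l 0 - w l 0) + (w l 0 - z l 0).
  by rewrite addrA subrK.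
exact: dvdp_add.
Qed.

Lemma eqv_iter c i w m : eqv (map_mx psi w) (v m) ->
  eqv (map_mx psi (iter c (mulmx (mulmx_gen beta i)) w))
      (v (iter c (fun x => x + U_(i))%MM m)).
Proof.
move=> H; elim: c => [//|c IH] /=.
rewrite map_mxM; apply: eqv_trans (step _ _).
exact: eqv_mul.
Qed.

Lemma iterU c i (a : 'X_{1..r}) i' :
  (iter c (fun x => x + U_(i))%MM a) i' = (a i' + c * (i == i'))%N.
Proof.
elim: c => [|c IH] /=; first by rewrite mul0n addn0.
by rewrite mnmDE IH mnm1E mulSn (addnC (nat_of_bool _)) addnA.
Qed.

Definition mon (m' : 'X_{1..r}) (s : seq 'I_r) :=
  foldr (fun i a => iter (m' i) (fun x => x + U_(i))%MM a) 0%MM s.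

Lemma mon_uniq m' s i' : uniq s -> mon m' s i' = if i' \in s then m' i' else 0%N.
Proof.
elim: s => [|a s IH] /=; first by rewrite mnm0E.
case/andP => nas us; rewrite iterU IH // in_cons.
case: (eqVneq a i') => [<-|ne] /=; first by rewrite (negbTE nas) add0n muln1.
by rewrite muln0 addn0.
Qed.

Lemma mon_enum m' : mon m' (enum 'I_r) = m'.
Proof. by apply/mnmP => i'; rewrite mon_uniq ?enum_uniq // mem_enum. Qed.

Lemma eqv_coordvec m' : eqv (map_mx psi (coordvec beta m')) (v m').
Proof.
rewrite /coordvec -{2}(mon_enum m').
elim: (enum 'I_r) => [|i s IH] /=; last exact: eqv_iter.
move=> l; rewrite !mxE rmorph_nat.
have -> : (0%MM == d) = false by apply: contraTF zero_in => /eqP ->; rewrite d_nb.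
by rewrite /= mul0r addr0 subrr dvdp0.
Qed.


Lemma nth_d (c : 'I_(size beta)) : (nth 0%MM beta c == d) = false.
Proof. by apply: contraTF (mem_nth 0%MM (ltn_ord c)) => /eqP ->; exact: d_nb. Qed.

Lemma col_v (M : 'M[{poly k}]_(size beta)) a b :
  M a b = (M *m v (nth 0%MM beta b)) a 0.
Proof.
rewrite mxE (bigD1 b) //= big1.
  by rewrite /v mxE nth_d /= mul0r !addr0 eqxx mulr1.
move=> c ne; rewrite /v mxE nth_d /= mul0r addr0.
by rewrite nth_uniq ?uniqb // val_eqE (negbTE ne) mulr0.
Qed.

Lemma col_v' (M N : 'M[{poly k}]_(size beta)) a b :
  (M *m N) a b = (M *m (N *m v (nth 0%MM beta b))) a 0.
Proof. by rewrite mulmxA -col_v. Qed.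

Lemma step2 i i' m : eqv (Y i *m (Y i' *m v m)) (v (m + U_(i') + U_(i))%MM).
Proof. exact: (@eqv_trans _ (Y i *m v (m + U_(i'))%MM) _ (@eqv_mul (Y i) _ _ (step i' m)) (step i _)). Qed.

Lemma comm_psi i i' a b :
  'X^2 %| psi ((mulmx_gen beta i *m mulmx_gen beta i'
                - mulmx_gen beta i' *m mulmx_gen beta i) a b).
Proof.
set MM := (_ - _).
have -> : psi (MM a b) = map_mx psi MM a b by rewrite [RHS]mxE.
rewrite /MM.
rewrite map_mxB !map_mxM -/(Y i) -/(Y i') mxE [X in _ + X]mxE.
set V0 := v (nth 0%MM beta b).
set V := v (nth 0%MM beta b + (U_(i') + U_(i)))%MM.
have h1 : eqv (Y i *m (Y i' *m V0)) V.
  by rewrite /V addmA; apply: step2.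
have h2 : eqv (Y i' *m (Y i *m V0)) V.
  by rewrite /V (addmC U_(i')%MM) addmA; apply: step2.
have H := dvdp_sub (h1 a) (h2 a); rewrite opprB addrA subrK in H.
suff E : (Y i *m Y i') a b - (Y i' *m Y i) a b =
         (Y i *m (Y i' *m V0)) a 0 - (Y i' *m (Y i *m V0)) a 0 by rewrite E.
by congr (_ - _); exact: col_v'.
Qed.

Lemma psi_J h : in_relJ beta h -> 'X^2 %| psi h.
Proof.
case=> g ->; rewrite rmorph_sum; apply: dvd_sum => i _.
rewrite rmorph_sum; apply: dvd_sum => i' _.
rewrite rmorph_sum; apply: dvd_sum => a _.
rewrite rmorph_sum; apply: dvd_sum => b _.
by rewrite rmorphM; apply: dvdp_mull; exact: comm_psi.
Qed.

Lemma coef0_psi p : (psi p)`_0 = meval (fun _ => 0) p.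
Proof.
rewrite -horner_coef0 /psi /meval /mmap horner_sum; apply: eq_bigr => m _.
rewrite hornerCM /mmap1 horner_prod; congr (_ * _); apply: eq_bigr => i _.
by rewrite horner_exp /ev; case: ifP => _; rewrite ?hornerX ?horner0.
Qed.

Lemma inM_X q : in_M beta q -> 'X %| psi q.
Proof.
move=> Hq; rewrite -(subr0 'X) -polyC0 dvdp_XsubCl /root horner_coef0 coef0_psi.
by apply/eqP.
Qed.

Lemma psi_M2 f : in_M2 beta f -> 'X^2 %| psi f.
Proof.
case=> s [h [Hs HJ ->]]; rewrite rmorphD rmorph_sum; apply: dvdp_add; last exact: psi_J.
rewrite big_seq; apply: dvd_sum => q qs; rewrite rmorphM expr2; have [h1 h2] := Hs q qs.
by apply: dvdp_mul; apply: inM_X.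
Qed.

Lemma psi_carrow a : is_arrow beta a ->
  'X^2 %| psi (carrow beta a) - ((a.1 == d) && (a.2 == j))%:R * 'X.
Proof.
case=> a1nb a2b; have [c0 E] := memb_ord _ a2b.
have -> : psi (carrow beta a) = (map_mx psi (coordvec beta a.1)) c0 0.
  rewrite /carrow rmorph_sum.
  apply: etrans (sum_nth c0 (fun l => (map_mx psi (coordvec beta a.1)) l 0)).
  by apply: eq_bigr => l _; rewrite rmorphM rmorph_nat mxE mulrC E.
have := eqv_coordvec a.1 c0; rewrite /v [X in _ - X]mxE -E.
have -> : (a.2 == a.1) = false by apply: contraNF a1nb => /eqP <-.
by rewrite add0r.
Qed.

Lemma psiZ c p : psi (c *: p) = c%:P * psi p.
Proof. exact: mmapZ. Qed.

Lemma part2 B : cotangent_basis k beta B -> B (d, j).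
Proof.
case=> Barr _ Bspan.
have Cdj : 'X^2 %| psi (carrow beta (d, j)) - 'X.
  by have := psi_carrow _ Ha; rewrite /= !eqxx mul1r.
have fM : in_M beta (carrow beta (d, j) : Pring k beta).
  rewrite /in_M; apply: (etrans (esym (coef0_psi _))); have/dvdpP [q Eq] := Cdj.
  rewrite -(subrK 'X (psi _)) Eq coefD coefMXn coefX /=.
  by rewrite add0r.
have [s [lam [sB M2]]] := Bspan _ fM.
case: (boolP ((d, j) \in s)) => [/sB //|nin]; exfalso.
have H2 := psi_M2 _ M2.
have H3 : 'X^2 %| psi (\sum_(a <- s) lam a *: carrow beta a).
  have -> : psi (\sum_(a <- s) lam a *: carrow beta a) =
            \sum_(a <- s) psi (lam a *: carrow beta a) by exact: rmorph_sum.
  rewrite big_seq; apply: dvd_sum => a ain; rewrite psiZ; apply: dvdp_mull.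
  have := psi_carrow _ (Barr a (sB a ain)).
  have -> : ((a.1 == d) && (a.2 == j)) = false.
    apply: contraNF nin; case: a ain => a1 a2 ain /= /andP [/eqP <- /eqP <-] //.
  by rewrite /= mul0r subr0.
have H4 : 'X^2 %| psi (carrow beta (d, j)).
  set S := \sum_(a <- s) _ in H2 H3.
  have -> : psi (carrow beta (d, j)) = psi (carrow beta (d, j) - S) + psi S.
    by rewrite -rmorphD subrK.
  exact: dvdp_add.
have H5 : 'X^2 %| ('X : {poly k}).
  by move: (dvdp_sub H4 Cdj); rewrite subKr.
have := dvdp_leq (negbT (polyX_eq0 k)) H5.
by rewrite size_polyXn size_polyX.
Qed.

End P2.

Theorem lemma5p2 (k : closedFieldType) (r : nat) (beta : seq 'X_{1..r})
    (d j : 'X_{1..r}) :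
  is_basis_set beta ->
  is_arrow beta (d, j) ->
  min_generator beta d ->
  maximal_elt beta j ->
  (forall a' : 'X_{1..r} * 'X_{1..r}, translates beta (d, j) a' -> a' = (d, j)) /\
  (forall B : 'X_{1..r} * 'X_{1..r} -> Prop,
     cotangent_basis k beta B -> B (d, j)).
Proof.
move=> Hb Ha Hd Hj; split; first exact: part1.
by move=> B; apply: part2.
Qed.
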